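(* For every probabilistic single-item auction there exists an optimal (expected-revenue-maximizing) mixed signaling scheme in which, for every signal $S$ with $|\mathrm{supp}(S)|\ge 2$, the highest and second-highest bids are equal, i.e. $\sum_j\psi_{w_1(S),j}\varphi(j,S)=\sum_j\psi_{w_2(S),j}\varphi(j,S)$.
   Context: A probabilistic single-item auction: $n\ge 2$ bidders, $m$ item types with probabilities $p_j$, nonnegative valuations $v_{i,j}$; $\psi_{i,j}=p_jv_{i,j}$. A mixed signaling scheme is a finite signal set $\mathcal{S}$ and $\varphi:[m]\times\mathcal{S}\to[0,1]$ with $\sum_S\varphi(j,S)=1$ for each $j$; $\mathrm{supp}(S)=\{j:\varphi(j,S)>0\}$. Its expected revenue is $\sum_S\mathrm{max2}_i\{\sum_j\psi_{i,j}\varphi(j,S)\}$ ($\mathrm{max2}$ = second-largest entry with multiplicity). $w_1(S)$ and $w_2(S)$ are the bidders with the largest and second-largest value of $\sum_j\psi_{i,j}\varphi(j,S)$ (ties broken by a fixed priority order). Bids after signal $S$ are these quantities divided by the common factor $\sum_jp_j\varphi(j,S)$. *)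

(* Defs.v *)
From mathcomp Require Import all_boot all_order all_algebra.
From mathcomp Require Import reals.
Set Implicit Arguments. Unset Strict Implicit. Unset Printing Implicit Defensive.
Import Order.TTheory GRing.Theory Num.Theory.
Local Open Scope ring_scope.

Section Auction.
Variable R : realType.

Definition sorted_vals (n : nat) (x : 'I_n -> R) : seq R :=
  sort (fun a b => b <= a) [seq x i | i <- enum 'I_n].

(* largest entry = bid of w_1(S); second-largest entry with multiplicity = bid of w_2(S) *)
Definition max1 (n : nat) (x : 'I_n -> R) : R := nth 0 (sorted_vals x) 0.
Definition max2 (n : nat) (x : 'I_n -> R) : R := nth 0 (sorted_vals x) 1.

Definition psi (n m : nat) (p : 'I_m -> R) (v : 'I_n -> 'I_m -> R) i j : R :=
  p j * v i j.

Definition is_scheme (m : nat) (S : finType) (phi : 'I_m -> S -> R) : Prop :=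
  (forall j s, 0 <= phi j s <= 1) /\ (forall j, \sum_(s : S) phi j s = 1).

Definition supp (m : nat) (S : finType) (phi : 'I_m -> S -> R) (s : S) : {set 'I_m} :=
  [set j | 0 < phi j s].

Definition weight (n m : nat) (p : 'I_m -> R) (v : 'I_n -> 'I_m -> R)
  (S : finType) (phi : 'I_m -> S -> R) (s : S) (i : 'I_n) : R :=
  \sum_(j < m) psi p v i j * phi j s.

Definition revenue (n m : nat) (p : 'I_m -> R) (v : 'I_n -> 'I_m -> R)
  (S : finType) (phi : 'I_m -> S -> R) : R :=
  \sum_(s : S) max2 (weight p v phi s).

End Auction.

(* Main.v *)
Require Import Defs.
From mathcomp Require Import all_boot all_order all_algebra.
From mathcomp Require Import reals.
From mathcomp Require Import all_classical all_reals all_analysis.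
From mathcomp Require Import lra.
Set Implicit Arguments. Unset Strict Implicit. Unset Printing Implicit Defensive.
Import Order.TTheory GRing.Theory Num.Theory.
Local Open Scope ring_scope.

Section Sorting.
Variable R : realType.
Variable n : nat.
Implicit Types x : 'I_n -> R.

Let geR := (fun a b : R => b <= a).
Lemma geR_trans : transitive geR.
Proof. by move=> y z w h1 h2; rewrite /geR (le_trans h2 h1). Qed.
Lemma geR_refl : reflexive geR.
Proof. by move=> y; rewrite /geR lexx. Qed.

Lemma sv_size x : size (sorted_vals x) = n.
Proof. by rewrite /sorted_vals size_sort size_map size_enum_ord. Qed.

Lemma sv_sorted x : sorted geR (sorted_vals x).
Proof. by apply: sort_sorted => a b; exact: le_total. Qed.

Lemma sv_count x (P : pred R) :
  count P (sorted_vals x) = count (fun i => P (x i)) (enum 'I_n).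
Proof.
by rewrite /sorted_vals (permP (permEl (perm_sort _ _))) count_map.
Qed.

Lemma sv_mem x y : (y \in sorted_vals x) = (y \in [seq x i | i <- enum 'I_n]).
Proof. by rewrite mem_sort. Qed.

Lemma sv_nth_le x k l : (k <= l)%N -> (l < n)%N ->
  nth 0 (sorted_vals x) l <= nth 0 (sorted_vals x) k.
Proof.
move=> kl ln.
have := @sorted_leq_nth _ geR geR_trans geR_refl 0 _ (sv_sorted x) k l.
rewrite !inE sv_size; apply => //; exact: leq_ltn_trans ln.
Qed.

Lemma max1_ge x a : x a <= max1 x.
Proof.
have : x a \in sorted_vals x by rewrite sv_mem map_f // mem_enum.
move=> /[dup] xin; rewrite -index_mem => ilt; rewrite -(nth_index 0 xin).
rewrite /max1; apply: sv_nth_le => //; by move: ilt; rewrite sv_size.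
Qed.

Lemma max1_ex x : (0 < n)%N -> exists a, max1 x = x a.
Proof.
move=> n0; have : max1 x \in sorted_vals x by rewrite /max1 mem_nth // sv_size.
by rewrite sv_mem => /mapP [a _ ->]; exists a.
Qed.

Lemma count2_ex (P : pred 'I_n) : (1 < count P (enum 'I_n))%N ->
  exists a b, [/\ a != b, P a & P b].
Proof.
rewrite -size_filter.
have : uniq (seq.filter P (enum 'I_n)) by rewrite filter_uniq // enum_uniq.
have mP : forall c, c \in seq.filter P (enum 'I_n) -> P c by move=> c; rewrite mem_filter => /andP[].
case: (seq.filter P (enum 'I_n)) mP => [|a [|b r]] //= mP /andP[ab _] _.
exists a, b; split; [| apply: mP; rewrite !inE eqxx ?orbT //..].
by move: ab; rewrite !inE negb_or => /andP[].
Qed.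

Lemma ex2_count (P : pred 'I_n) a b : a != b -> P a -> P b ->
  (1 < count P (enum 'I_n))%N.
Proof.
move=> ab Pa Pb; rewrite -size_filter.
have : (size [:: a; b] <= size (seq.filter P (enum 'I_n)))%N.
  apply: uniq_leq_size; first by rewrite /= inE ab.
  by move=> c; rewrite !inE mem_filter mem_enum andbT => /orP[] /eqP ->; rewrite ?Pa ?Pb.
by [].
Qed.

Lemma max2_ge x a b : (1 < n)%N -> a != b -> Num.min (x a) (x b) <= max2 x.
Proof.
move=> n1 ab; rewrite leNgt; apply/negP => hlt.
move: hlt; rewrite lt_min => /andP[Pa Pb].
have := ex2_count (P := fun i => max2 x < x i) ab Pa Pb.
rewrite -sv_count /max2.
have hs := sv_size x. have hle := sv_nth_le x.
case E: (sorted_vals x) hs hle => [|y0 [|y1 r]] hs hle; try by rewrite -hs in n1.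
rewrite /= ltxx add0n.
suff -> : count (fun y => y1 < y) r = 0%N by case: (y1 < y0).
apply/eqP; rewrite -leqn0 leqNgt -has_count; apply/hasP => -[y yin].
have := hle 1%N (index y r).+2 isT.
rewrite /= nth_index // => h; rewrite ltNge h //.
by rewrite -hs /= !ltnS index_mem.
Qed.

Lemma max2_ex x : (1 < n)%N -> exists a b, [/\ a != b, max2 x <= x a & max2 x <= x b].
Proof.
move=> n1; apply: (count2_ex (P := fun i => max2 x <= x i)).
rewrite -sv_count /max2.
have hs := sv_size x. have hle := sv_nth_le x.
case E: (sorted_vals x) hs hle => [|y0 [|y1 r]] hs hle; try by rewrite -hs in n1.
rewrite /= lexx.
have : y1 <= y0 by have := hle 0%N 1%N isT; rewrite /= ; apply; rewrite -hs.
by move=> ->.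
Qed.

End Sorting.

Section Cons.
Variable R : realType.
Variable n : nat.
Hypothesis n1 : (1 < n)%N.
Implicit Types x : 'I_n -> R.

Lemma max2_eq_ex x : exists a b, a != b /\ max2 x = Num.min (x a) (x b).
Proof.
have [a [b [ab ha hb]]] := max2_ex x n1; exists a, b; split => //.
apply/le_anti; rewrite max2_ge // andbT le_min ha hb //.
Qed.

Lemma max2_le_max1 x : max2 x <= max1 x.
Proof.
have [a [b [ab ->]]] := max2_eq_ex x.
apply: le_trans (max1_ge x a); rewrite ge_min lexx //.
Qed.

Lemma max2_homog x c : 0 <= c -> max2 (fun i => c * x i) = c * max2 x.
Proof.
move=> c0; apply/le_anti/andP; split.
  have [a [b [ab ->]]] := max2_eq_ex (fun i => c * x i).
  by rewrite -minr_pMr // ler_wpM2l // max2_ge.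
have [a [b [ab ->]]] := max2_eq_ex x.
by rewrite minr_pMr // (max2_ge (fun i => c * x i)).
Qed.

Lemma max2_ge0 x : (forall i, 0 <= x i) -> 0 <= max2 x.
Proof.
move=> x0; have [a [b [ab ->]]] := max2_eq_ex x.
by rewrite le_min !x0.
Qed.

Lemma max_gap x : max1 x != max2 x ->
  exists a b, [/\ a != b, x a = max1 x, x b = max2 x & x b < x a].
Proof.
move=> ne.
have [a ha] := max1_ex x (ltnW n1).
have [a' [b' [ab' h1 h2]]] := max2_ex x n1.
have key : forall c, c != a -> max2 x <= x c -> x c = max2 x.
  move=> c ca hc; apply/le_anti; rewrite hc andbT.
  have := max2_ge x n1 (a:=a) (b:=c); rewrite eq_sym ca => /(_ isT).
  have xca : x c <= x a by have := max1_ge x c; rewrite ha.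
  by rewrite min_r.
have [c [ca hc]] : exists c, c != a /\ max2 x <= x c.
  case: (eqVneq a' a) => [e|ne']; last by exists a'.
  by exists b'; split => //; rewrite -e eq_sym.
exists a, c; split; [by rewrite eq_sym | by rewrite ha | exact: key | ].
rewrite key // -ha lt_neqAle eq_sym ne max2_le_max1 //.
Qed.

End Cons.

Import numFieldNormedType.Exports.
Local Open Scope classical_set_scope.
Local Open Scope ring_scope.

Section M2.
Variable R : realType.
Variable n : nat.

Definition M2 (x : 'I_n -> R) : R :=
  \big[Num.max/0]_(a < n) \big[Num.max/0]_(b < n)
     (if b != a then Num.min (x a) (x b) else 0).

Lemma le_bigmax0 (F : 'I_n -> R) i : F i <= \big[Num.max/0]_j F j.
Proof. by rewrite (bigD1 i) //= le_max lexx. Qed.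

Lemma M2E x : (1 < n)%N -> (forall i, 0 <= x i) -> M2 x = max2 x.
Proof.
move=> n1 x0; apply/le_anti/andP; split.
  rewrite /M2; elim/big_ind: _ => [|y z hy hz|a _]; first exact: max2_ge0.
    by rewrite ge_max hy hz.
  elim/big_ind: _ => [|y z hy hz|b _]; first exact: max2_ge0.
    by rewrite ge_max hy hz.
  case: ifP => ba; last exact: max2_ge0.
  by apply: max2_ge => //; rewrite eq_sym ba.
have [a [b [ab ->]]] := max2_eq_ex n1 x.
apply: le_trans (le_bigmax0 _ a); apply: le_trans (le_bigmax0 _ b).
by rewrite eq_sym ab.
Qed.

End M2.

Section Cont.
Variable R : realType.
Variable T : topologicalType.

Lemma cont_sum (I : Type) (s : seq I) (f : I -> T -> R) :
  (forall i, continuous (f i)) -> continuous (fun y => \sum_(i <- s) f i y).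
Proof.
move=> hf; elim: s => [|a s IH].
  have -> : (fun y => \sum_(i <- [::]) f i y) = fun=> 0.
    by apply/funext => y; rewrite big_nil.
  exact: cst_continuous.
have -> : (fun y => \sum_(i <- a :: s) f i y) = f a + (fun y => \sum_(i <- s) f i y).
  by apply/funext => y; rewrite big_cons.
by move=> y; apply: continuousD; [exact: hf | exact: IH].
Qed.

Lemma cont_max (I : Type) (s : seq I) (f : I -> T -> R) :
  (forall i, continuous (f i)) -> continuous (fun y => \big[Num.max/0]_(i <- s) f i y).
Proof.
move=> hf; elim: s => [|a s IH].
  have -> : (fun y => \big[Num.max/0]_(i <- [::]) f i y) = fun=> 0.
    by apply/funext => y; rewrite big_nil.
  exact: cst_continuous.
have -> : (fun y => \big[Num.max/0]_(i <- a :: s) f i y) = (f a) \max (fun y => \big[Num.max/0]_(i <- s) f i y).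
  by apply/funext => y; rewrite big_cons.
by move=> y; apply: continuous_max; [exact: hf | exact: IH].
Qed.

Lemma cont_M2 n (w : T -> 'I_n -> R) : (forall i, continuous (fun y => w y i)) ->
  continuous (fun y => M2 (w y)).
Proof.
move=> hw; rewrite /M2; apply: cont_max => a; apply: cont_max => b.
case: (b != a); last exact: cst_continuous.
by move=> y; apply: continuous_min; [exact: hw|exact: hw].
Qed.

Lemma cont_mulc (c : R) (f : T -> R) : continuous f -> continuous (fun y => c * f y).
Proof. by move=> hf y; apply: continuousM; [exact: cst_continuous| exact: hf]. Qed.

End Cont.

Section Main.
Variables (R : realType) (n m : nat) (p : 'I_m -> R) (v : 'I_n -> 'I_m -> R).
Hypotheses (n2 : (1 < n)%N) (p0 : forall j, 0 <= p j) (v0 : forall i j, 0 <= v i j).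

Local Notation T := ('I_n * 'I_n + 'I_m)%type.
Local Notation N := #|{: 'I_m * T}|.

Definition phiv (y : 'rV[R]_N) (j : 'I_m) (t : T) : R := y ord0 (enum_rank (j, t)).
Definition vecof (f : 'I_m -> T -> R) : 'rV[R]_N :=
  \row_k f (enum_val k).1 (enum_val k).2.

Arguments phiv : simpl never.

Lemma phiv_vecof f : phiv (vecof f) = f.
Proof. by apply/funext => j; apply/funext => t; rewrite /phiv /vecof mxE enum_rankK. Qed.

Definition revY (y : 'rV[R]_N) : R := \sum_(t : T) M2 (weight p v (phiv y) t).

Definition cst (j : 'I_m) : R := \sum_(i < n) psi p v i j.
Definition Phi (y : 'rV[R]_N) : R :=
  \sum_(ab : 'I_n * 'I_n) \sum_(j < m) phiv y j (inl ab) * cst j.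

Definition Box : set 'rV[R]_N :=
  [set y | forall k, (fun=> `[(0:R), 1]%classic) k (y ord0 k)].
Definition C1 : set 'rV[R]_N :=
  \bigcap_(j : 'I_m) [set y | \sum_(t : T) phiv y j t = 1].
Definition gz (jj : 'I_m * 'I_m) (y : 'rV[R]_N) : R :=
  if jj.2 != jj.1 then phiv y jj.2 (inr jj.1) else 0.
Definition C2 : set 'rV[R]_N := \bigcap_(jj : 'I_m * 'I_m) [set y | gz jj y = 0].
Definition Kset : set 'rV[R]_N := Box `&` (C1 `&` C2).

Lemma psi_ge0 i j : 0 <= psi p v i j.
Proof. by rewrite /psi mulr_ge0. Qed.

Lemma KsetP y : Kset y <->
  [/\ forall j t, 0 <= phiv y j t <= 1,
      forall j, \sum_(t : T) phiv y j t = 1 &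
      forall j j', j' != j -> phiv y j' (inr j) = 0].
Proof.
split.
  move=> [hb [h1 h2]]; split.
  - by move=> j t; have := hb (enum_rank (j, t)); rewrite /= in_itv.
  - by move=> j; exact: (h1 j I).
  - by move=> j j' jj; have := h2 (j, j') I; rewrite /gz /= jj.
move=> [hb h1 h2]; split; [|split].
- move=> k; rewrite /= in_itv /=.
  by have := hb (enum_val k).1 (enum_val k).2; rewrite /phiv -surjective_pairing enum_valK.
- by move=> j _; exact: h1.
- by move=> [j j'] _; rewrite /gz /=; case: ifP => // jj; exact: h2.
Qed.

Lemma cont_coord k : continuous (fun y : 'rV[R]_N => y ord0 k).
Proof. exact: coord_continuous. Qed.

Lemma cont_phiv j t : continuous (fun y : 'rV[R]_N => phiv y j t).
Proof. exact: cont_coord. Qed.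

Lemma cont_weight t i : continuous (fun y => weight p v (phiv y) t i).
Proof.
rewrite /weight; apply: cont_sum => j; apply: cont_mulc; exact: cont_phiv.
Qed.

Lemma cont_rev : continuous revY.
Proof.
rewrite /revY; apply: cont_sum => t; apply: cont_M2 => i; exact: cont_weight.
Qed.

Lemma cont_Phi : continuous Phi.
Proof.
rewrite /Phi; apply: cont_sum => ab; apply: cont_sum => j.
have -> : (fun y => phiv y j (inl ab) * cst j) = (fun y => cst j * phiv y j (inl ab)).
  by apply/funext => y; rewrite mulrC.
apply: cont_mulc; exact: cont_phiv.
Qed.

Lemma closed_level (f : 'rV[R]_N -> R) c : continuous f -> closed [set y | f y = c].
Proof.
move=> hf; have := (continuous_closedP f).1 hf _ (@closed_eq _ c); by [].
Qed.

Lemma compact_K : compact Kset.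
Proof.
apply: compact_closedI.
  by apply: (@rV_compact _ _ (fun=> `[(0:R), 1]%classic)) => _; exact: segment_compact.
apply: closedI.
  apply: (@closed_bigI _ _ setT (fun j => [set y | \sum_(t : T) phiv y j t = 1])) => j _.
  by apply: closed_level; apply: cont_sum => t; exact: cont_phiv.
apply: (@closed_bigI _ _ setT (fun jj => [set y | gz jj y = 0])) => jj _.
apply: closed_level; case E: (jj.2 != jj.1).
  have -> : gz jj = fun y => phiv y jj.2 (inr jj.1) by apply/funext => y; rewrite /gz E.
  exact: cont_phiv.
have -> : gz jj = fun=> 0 by apply/funext => y; rewrite /gz E.
exact: cst_continuous.
Qed.


Lemma weight_ge0 (S : finType) (phi : 'I_m -> S -> R) t i :
  (forall j t, 0 <= phi j t) -> 0 <= weight p v phi t i.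
Proof. by move=> h; rewrite /weight sumr_ge0 // => j _; rewrite mulr_ge0 ?psi_ge0. Qed.

Lemma revenue_rev y : Kset y -> revenue p v (phiv y) = revY y.
Proof.
move=> /KsetP [hb _ _]; rewrite /revenue /revY; apply: eq_bigr => t _.
rewrite M2E //; move=> i; apply: weight_ge0 => j t'; by case/andP: (hb j t').
Qed.

Lemma merge_scheme (S' : finType) (phi' : 'I_m -> S' -> R) : is_scheme phi' ->
  exists y, Kset y /\ revenue p v phi' <= revY y.
Proof.
move=> [hb hs].
pose w s := weight p v phi' s.
have phi'0 : forall j s, 0 <= phi' j s by move=> j s; case/andP: (hb j s).
pose i0 : 'I_n := Ordinal (ltnW n2).
pose pr s := odflt (i0, i0) [pick ab : 'I_n * 'I_n | (ab.1 != ab.2) &&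
   (max2 (w s) == Num.min (w s ab.1) (w s ab.2))].
have prP : forall s, (pr s).1 != (pr s).2 /\ max2 (w s) = Num.min (w s (pr s).1) (w s (pr s).2).
  move=> s; rewrite /pr; case: pickP => [ab /andP[h1 /eqP h2] | none] //=.
  have [a [b [ab e]]] := max2_eq_ex n2 (w s).
  by have := none (a, b); rewrite /= ab e eqxx.
pose f (j : 'I_m) (t : T) := match t with
  inl ab => \sum_(s | pr s == ab) phi' j s | inr _ => 0 end.
have f0 : forall j t, 0 <= f j t by move=> j [ab|j'] //=; rewrite sumr_ge0.
have fsum : forall j, \sum_(t : T) f j t = 1.
  move=> j; rewrite big_sumType /=.
  rewrite [X in _ + X]big1 // addr0.
  rewrite -(hs j) (partition_big pr xpredT) //=.
have f1 : forall j t, f j t <= 1.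
  move=> j [ab|j'] //=; rewrite -(hs j) [X in _ <= X](bigID (fun s => pr s == ab)) /=.
  by rewrite lerDl sumr_ge0.
have hK : Kset (vecof f).
  apply/KsetP; rewrite phiv_vecof; split => //.
  by move=> j t; rewrite f0 f1.
exists (vecof f); split => //.
rewrite -revenue_rev // phiv_vecof.
rewrite /revenue (partition_big pr xpredT) //= big_sumType /=.
apply: le_trans (_ : _ <= \sum_(ab : 'I_n * 'I_n) max2 (weight p v f (inl ab))) _; last first.
  by rewrite lerDl sumr_ge0 // => j _; rewrite max2_ge0 // => i; exact: weight_ge0.
apply: ler_sum => -[a b] _.
case: (eqVneq a b) => [eab | nab].
  rewrite big1 ?max2_ge0 //; first by move=> i; exact: weight_ge0.
  by move=> s /eqP prs; exfalso; have := (prP s).1; rewrite prs eab eqxx.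
have wf : forall i, weight p v f (inl (a, b)) i = \sum_(s | pr s == (a, b)) w s i.
  move=> i; rewrite /weight /= /w /weight exchange_big /=; apply: eq_bigr => j _.
  by rewrite mulr_sumr.
apply: le_trans (_ : _ <= Num.min (\sum_(s | pr s == (a, b)) w s a)
                                (\sum_(s | pr s == (a, b)) w s b)) _.
  rewrite le_min; apply/andP; split; apply: ler_sum => s /eqP prs;
    by rewrite (prP s).2 prs /= ge_min lexx ?orbT.
by rewrite -!wf max2_ge.
Qed.


Lemma supp_inr y j0 : Kset y -> (#|supp (phiv y) (inr j0)| <= 1)%N.
Proof.
move=> /KsetP [_ _ h2].
have sub : supp (phiv y) (inr j0) \subset [set j0]%SET.
  apply/fintype.subsetP => j; rewrite /supp !inE => hj; apply/eqP.
  case: (eqVneq j j0) => // ne; by move: hj; rewrite h2 // ltxx.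
by rewrite -(cards1 j0) subset_leq_card.
Qed.

Lemma sum_ind (I : finType) (t0 : I) (c : R) : \sum_(t : I) (if t == t0 then c else 0) = c.
Proof.
rewrite (bigD1 t0) //= eqxx big1 ?addr0 // => t /negbTE ->; by [].
Qed.

Lemma sum_sel (F : 'I_m -> R) (j : 'I_m) (b : bool) c :
  \sum_(j' < m) F j' * (if (j' == j) && b then c else 0) = if b then c * F j else 0.
Proof.
case: b.
  rewrite (bigD1 j) //= eqxx big1 ?addr0; first by rewrite mulrC.
  by move=> j' /negbTE ->; rewrite mulr0.
by rewrite big1 // => j' _; rewrite andbF mulr0.
Qed.

Lemma two_le (F : T -> R) t1 t2 : t1 != t2 -> (forall t, 0 <= F t) ->
  F t1 + F t2 <= \sum_(t : T) F t.
Proof.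
move=> ne F0; rewrite (bigD1 t1) //= (bigD1 t2) /=; last by rewrite eq_sym.
by rewrite addrA lerDl sumr_ge0.
Qed.

Lemma improve y s : Kset y -> (2 <= #|supp (phiv y) s|)%N ->
  max1 (weight p v (phiv y) s) != max2 (weight p v (phiv y) s) ->
  exists y2, [/\ Kset y2, revY y <= revY y2 & Phi y2 < Phi y].
Proof.
move=> hK hs ne; have [hb h1 h2] := (KsetP y).1 hK.
have hq0 : forall j t, 0 <= phiv y j t by move=> j t; case/andP: (hb j t).
have hq1 : forall j t, phiv y j t <= 1 by move=> j t; case/andP: (hb j t).
case: s hs ne => [ab0 | j0] hs ne; last first.
  by have := supp_inr j0 hK; rewrite leqNgt hs.
set s : T := inl ab0 in hs ne *.
set x := weight p v (phiv y) s in ne.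
have [a [b [ab xa xb xba]]] := max_gap n2 ne.
pose g := x a - x b.
have g0 : 0 < g by rewrite /g subr_gt0.
have gE : g = \sum_(j < m) (psi p v a j - psi p v b j) * phiv y j s.
  by rewrite /g /x /weight -sumrB; apply: eq_bigr => j _; rewrite mulrBl.
have [j hj] : exists j, 0 < (psi p v a j - psi p v b j) * phiv y j s.
  case/boolP: [exists j, 0 < (psi p v a j - psi p v b j) * phiv y j s].
    by move=> /existsP [j hj]; exists j.
  move=> /existsPn hn; exfalso.
  have : g <= 0.
    rewrite gE -oppr_ge0 -sumrN sumr_ge0 // => j _.
    by rewrite oppr_ge0 leNgt (negbTE (hn j)).
  by rewrite leNgt g0.
pose q := phiv y j s.
pose d := psi p v a j - psi p v b j.
have q0 : 0 < q.
  rewrite lt_neqAle hq0 andbT; apply/eqP => e0.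
  by move: hj; rewrite -/q -e0 mulr0 ltxx.
have d0 : 0 < d by move: hj; rewrite -/q -/d pmulr_lgt0.
pose e := Num.min q (g / d).
have e0 : 0 < e by rewrite /e lt_min q0 divr_gt0.
have eq' : e <= q by rewrite /e ge_min lexx.
have ed : e * d <= g.
  have : e <= g / d by rewrite /e ge_min lexx orbT.
  have gd : g / d * d = g by rewrite divfK // gt_eqF.
  move=> h; rewrite -gd; by rewrite ler_pM2r.
pose f2 j' t := phiv y j' t - (if (j' == j) && (t == s) then e else 0)
                 + (if (j' == j) && (t == inr j) then e else 0).
have sinr : (s == inr j) = false by [].
have rq : phiv y j (inr j) + q <= 1.
  rewrite -(h1 j) addrC; apply: two_le => //.
have hK2 : Kset (vecof f2).
  apply/KsetP; rewrite phiv_vecof; split.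
  - move=> j' t; rewrite /f2; case: (eqVneq j' j) => [->|nj] /=; last first.
      by rewrite !subr0 !addr0 hb.
    case: (eqVneq t s) => [->|ts] /=.
      have := hq1 j s; have := eq'; rewrite /q => h h'.
      apply/andP; split; lra.
    case: (eqVneq t (inr j)) => [->|tj] /=.
      have := hq0 j (inr j); have := eq'; have := rq; rewrite /q => h h' h''.
      apply/andP; split; lra.
    by rewrite subr0 addr0 hb.
  - move=> j'; rewrite /f2 big_split /= sumrB h1.
    case: (boolP (j' == j)) => hjj.
      rewrite /= !sum_ind; lra.
    by rewrite /= !big1_eq subr0 addr0.
  - move=> j1 j'' nj; rewrite /f2 h2 //=.
    case: (eqVneq j'' j) => [ej|] /=; last by rewrite subr0 addr0.
    have -> : (inr j1 == inr j :> T) = false.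
      by apply/negbTE; apply: contra nj => /eqP [->]; rewrite ej.
    by rewrite subr0 addr0.
have wE : forall t i, weight p v f2 t i = weight p v (phiv y) t i
    - (if t == s then e * psi p v i j else 0) + (if t == inr j then e * psi p v i j else 0).
  move=> t i; rewrite /weight /f2.
  under eq_bigr => j' _ do rewrite mulrDr mulrBr.
  rewrite big_split sumrB /= !sum_sel; by [].
have winr : weight p v (phiv y) (inr j) = fun i => phiv y j (inr j) * psi p v i j.
  apply/funext => i; rewrite /weight (bigD1 j) //.
  rewrite [X in _ + X = _]big1 ?addr0; first by rewrite mulrC.
  by move=> j' nj; rewrite h2 ?mulr0.
have cpos : 0 < cst j.
  have : psi p v a j <= cst j by rewrite /cst (bigD1 a) //= lerDl sumr_ge0 // => i _; exact: psi_ge0.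
  have := psi_ge0 b j; rewrite /d in d0; lra.
exists (vecof f2); split => //.
  rewrite -!revenue_rev // phiv_vecof /revenue.
  pose del t := (if t == s then - (e * psi p v b j) else 0) + (if t == inr j then e * psi p v b j else 0).
  apply: le_trans (_ : _ <= \sum_(t : T) (max2 (weight p v (phiv y) t) + del t)) _.
    by rewrite big_split /= /del big_split /= sum_ind sum_ind addNr addr0.
  apply: ler_sum => t _; rewrite /del.
  case: (eqVneq t s) => [->|ts].
    rewrite sinr addr0.
    have -> : weight p v f2 s = fun i => x i - e * psi p v i j.
      by apply/funext => i; rewrite wE eqxx sinr addr0.
    apply: le_trans _ (max2_ge (fun i => x i - e * psi p v i j) n2 ab).
    cbv beta; rewrite le_min -xb; apply/andP; split; rewrite /d /g in d0 ed g0 *; nra.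
  case: (eqVneq t (inr j)) => [->|tj].
    rewrite add0r.
    have -> : weight p v f2 (inr j) = fun i => (phiv y j (inr j) + e) * psi p v i j.
      apply/funext => i; rewrite wE eqxx /= winr mulrDl subr0; by [].
    rewrite winr.
    have re0 : 0 <= phiv y j (inr j) + e by have := hq0 j (inr j); lra.
    have H1 := max2_homog n2 (fun i => psi p v i j) re0.
    have H2 := max2_homog n2 (fun i => psi p v i j) (hq0 j (inr j)).
    cbv beta in H1, H2; rewrite H1 H2.
    have : psi p v b j <= max2 (fun i => psi p v i j).
      apply: le_trans _ (max2_ge (fun i => psi p v i j) n2 ab); rewrite le_min lexx andbT.
      by rewrite /d in d0; lra.
    move=> hM; rewrite mulrDl lerD2l ler_wpM2l // ltW //.
  have -> : weight p v f2 t = weight p v (phiv y) t.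
    by apply/funext => i; rewrite wE (negbTE ts) (negbTE tj) subr0 addr0.
  by rewrite ?(negbTE ts) ?(negbTE tj) /= ?add0r ?addr0.
rewrite /Phi phiv_vecof.
have -> : \sum_(ab : 'I_n * 'I_n) \sum_(j' < m) f2 j' (inl ab) * cst j' =
    \sum_(ab : 'I_n * 'I_n) \sum_(j' < m) phiv y j' (inl ab) * cst j' - e * cst j.
  rewrite -(sum_ind ab0 (e * cst j)) -sumrB; apply: eq_bigr => ab1 _.
  rewrite /f2 /=.
  under eq_bigr => j' _ do rewrite andbF addr0 mulrBl.
  rewrite sumrB; congr (_ - _).
  case: (eqVneq ab1 ab0) => [->|nab].
    rewrite eqxx (bigD1 j) //= eqxx big1 ?addr0 // => j' /negbTE -> //; by rewrite mul0r.
  rewrite big1 // => j' _.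
  have -> : (inl ab1 == s) = false by apply/negbTE; apply: contra nab => /eqP [->].
  by rewrite andbF mul0r.
rewrite ltrBlDr ltrDl mulr_gt0 //.
Qed.


Lemma K_nonempty : exists y, Kset y.
Proof.
exists (vecof (fun j (t : T) => if t == inr j then (1:R) else 0)).
apply/KsetP; rewrite phiv_vecof; split.
- by move=> j t; case: ifP => _; rewrite ?lexx ?ler01.
- by move=> j; rewrite sum_ind.
- move=> j j' ne; have -> : (inr j == inr j' :> T) = false.
    by apply/negbTE; apply: contra ne => /eqP [->].
  by [].
Qed.

Lemma exists_lex : exists yo, [/\ Kset yo, (forall y, Kset y -> revY y <= revY yo)
   & forall y, Kset y -> revY y = revY yo -> Phi yo <= Phi y].
Proof.
have [y0 hy0] := K_nonempty.
have hc1 : {within Kset, continuous revY}.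
  by apply: continuous_subspaceT; exact: cont_rev.
have [ys ysK ysmax] := @EVT_max_rV R N revY Kset (ex_intro _ y0 hy0) compact_K hc1.
pose Mx := revY ys.
pose K' := Kset `&` [set y | revY y = Mx].
have K'0 : K' !=set0 by exists ys; split => //; rewrite inE in ysK.
have cK' : compact K'.
  by apply: compact_closedI; [exact: compact_K | apply: closed_level; exact: cont_rev].
have hc2 : {within K', continuous Phi}.
  by apply: continuous_subspaceT; exact: cont_Phi.
have [yo yoK yomin] := @EVT_min_rV R N Phi K' K'0 cK' hc2.
move: (yoK); rewrite inE => -[yoKs yoM].
exists yo; split => //.
  by move=> y yK; rewrite yoM; apply: ysmax; rewrite inE.
move=> y yK yM; apply: yomin; rewrite inE; split => //=; by rewrite yM yoM.
Qed.

End Main.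

Local Close Scope classical_set_scope.

Theorem mainTheorem8 (R : realType) (n m : nat) (p : 'I_m -> R)
  (v : 'I_n -> 'I_m -> R) :
  (2 <= n)%N ->
  (forall j, 0 <= p j) -> \sum_(j < m) p j = 1 ->
  (forall i j, 0 <= v i j) ->
  exists (S : finType) (phi : 'I_m -> S -> R),
    [/\ is_scheme phi,
        (forall (S' : finType) (phi' : 'I_m -> S' -> R),
            is_scheme phi' -> revenue p v phi' <= revenue p v phi)
      & forall s : S, (2 <= #|supp phi s|)%N ->
            max1 (weight p v phi s) = max2 (weight p v phi s)].
Proof.
move=> n2 p0 _ v0.
have [yo [yoK yomax yomin]] := @exists_lex R n m p v.
have [hb h1 h2] := (KsetP yo).1 yoK.
exists ('I_n * 'I_n + 'I_m)%type, (phiv yo); split.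
- by split.
- move=> S' phi' hs; have [y [yK hy]] := merge_scheme n2 p0 v0 hs.
  rewrite revenue_rev //; apply: le_trans hy _; exact: yomax.
- move=> s hs; case: (eqVneq (max1 (weight p v (phiv yo) s)) (max2 (weight p v (phiv yo) s))) => // ne.
  exfalso.
  have [y2 [y2K y2rev y2Phi]] := improve n2 p0 v0 yoK hs ne.
  have y2M : revY p v y2 = revY p v yo by apply/le_anti; rewrite y2rev yomax.
  have := yomin y2 y2K y2M.
  by rewrite leNgt y2Phi.
Qed.
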